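(* Let $T$ be a tree with $n$ vertices. Then there exists a category system $\mathcal S$ on the vertex set of $T$ such that the greedy category-based routing strategy ROUTING correctly routes messages between all pairs of vertices of $T$ and $\operatorname{memdim}(\mathcal S)=O\big((\operatorname{diam}(T)+\log n)^2\big)$.
   Context: A category system for a graph with vertex set $U$ is a family $\mathcal S\subset 2^U$. For $u\in U$ let $\mathrm{cat}(u)=\{C\in\mathcal S: u\in C\}$; the membership dimension is $\operatorname{memdim}(\mathcal S)=\max_{u\in U}|\mathrm{cat}(u)|$. For $s,t\in U$ define $d(s,t)=|\mathrm{cat}(t)\setminus \mathrm{cat}(s)|$. $N(u)$ is the set of neighbors of $u$, and $\operatorname{diam}$ is the maximum shortest-path distance between two vertices. ROUTING: a node $u$ holding a message for destination $w\neq u$ forwards it to a neighbor $v\in N(u)$ with $d(v,w)<d(u,w)$. ROUTING correctly routes messages between all pairs of vertices if for every ordered pair of distinct vertices $u,w$ there is a neighbor $v\in N(u)$ with $d(v,w)<d(u,w)$. *)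

(* Defs.v *)
From mathcomp Require Import all_boot.
Set Implicit Arguments. Unset Strict Implicit. Unset Printing Implicit Defensive.

Definition simple_graph (T : finType) (e : rel T) : Prop :=
  symmetric e /\ irreflexive e.

Definition connected_graph (T : finType) (e : rel T) : Prop :=
  forall x y : T, connect e x y.

Definition acyclic (T : finType) (e : rel T) : Prop :=
  forall c : seq T, uniq c -> 2 < size c -> ~~ cycle e c.

Definition is_tree (T : finType) (e : rel T) : Prop :=
  simple_graph e /\ connected_graph e /\ acyclic e.

Fixpoint ball (T : finType) (e : rel T) (k : nat) (x : T) : {set T} :=
  match k with
  | 0 => [set x]
  | k'.+1 => ball e k' x :|: [set y | [exists z in ball e k' x, e z y]]
  end.

(* shortest-path distance (for a connected graph it is < #|T|) *)
Definition gdist (T : finType) (e : rel T) (x y : T) : nat :=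
  find (fun k => y \in ball e k x) (iota 0 #|T|).

Definition diam (T : finType) (e : rel T) : nat :=
  \max_(x : T) \max_(y : T) gdist e x y.

Definition cat (T : finType) (S : {set {set T}}) (u : T) : {set {set T}} :=
  [set C in S | u \in C].

Definition memdim (T : finType) (S : {set {set T}}) : nat :=
  \max_(u : T) #|cat S u|.

Definition cdist (T : finType) (S : {set {set T}}) (s t : T) : nat :=
  #|cat S t :\: cat S s|.

Definition routing_correct (T : finType) (e : rel T) (S : {set {set T}}) : Prop :=
  forall u w : T, u != w -> exists v : T, e u v /\ cdist S v w < cdist S u w.

(* Main.v *)
Require Import Defs.
From mathcomp Require Import all_boot zify.

Lemma bits_differ L a b : a < 2 ^ L -> b < 2 ^ L -> a != b ->
  exists j, j < L /\ odd (a %/ 2 ^ j) != odd (b %/ 2 ^ j).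
Proof.
elim: L a b => [|L IH] a b.
  rewrite expn0 => ha hb; move: ha hb; rewrite !ltnS !leqn0 => /eqP -> /eqP ->.
  by rewrite eqxx.
move=> ha hb nab.
case: (boolP (odd a == odd b)) => hodd; last first.
  by exists 0; rewrite expn0 !divn1.
have nh : a./2 != b./2.
  apply: contra nab => /eqP E; apply/eqP.
  by rewrite -(odd_double_half a) -(odd_double_half b) E (eqP hodd).
have ha' : a./2 < 2 ^ L.
  rewrite -divn2 ltn_divLR // -expnSr; by [].
have hb' : b./2 < 2 ^ L.
  rewrite -divn2 ltn_divLR // -expnSr; by [].
have [j [hj hd]] := IH _ _ ha' hb' nh.
exists j.+1; split => //.
by rewrite expnS !divnMA !divn2.
Qed.

Lemma cdist_lt (T : finType) (S : {set {set T}}) u v w :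
  (forall C, C \in S -> u \in C -> w \in C -> v \in C) ->
  (exists C, [/\ C \in S, v \in C, w \in C & u \notin C]) ->
  cdist S v w < cdist S u w.
Proof.
move=> Hs [C0 [C0S vC wC uC]].
rewrite /cdist; apply: proper_card; apply/properP; split.
  apply/subsetP => C; rewrite !inE => /andP [hv /andP [hS hw]].
  rewrite hS hw /= andbT; apply: contra hv => hu; by rewrite hS (Hs C).
exists C0; rewrite !inE C0S wC /= ?andbT ?uC // vC //.
Qed.

Set Implicit Arguments. Unset Strict Implicit.
Section Graph.
Variables (T : finType) (e : rel T).
Hypothesis econn : forall x y : T, connect e x y.

Lemma ball_mono k m x : k <= m -> ball e k x \subset ball e m x.
Proof.
elim: m => [|m IH]; first by rewrite leqn0 => /eqP ->.
rewrite leq_eqVlt => /orP [/eqP -> // | ].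
rewrite ltnS => /IH H; apply: (subset_trans H) => /=; exact: subsetUl.
Qed.

Lemma path_ball x p : path e x p -> last x p \in ball e (size p) x.
Proof.
elim/last_ind: p => [|p z IH]; first by rewrite /= inE.
rewrite rcons_path last_rcons size_rcons => /andP [hp he] /=.
apply/setUP; right; rewrite inE; apply/existsP; exists (last x p).
by rewrite IH.
Qed.

Lemma ball_reach x y : y \in ball e #|T|.-1 x.
Proof.
have := econn x y => /connectP [p hp ->].
case: (shortenP hp) => p' hp' hu _.
have hs : size p' <= #|T|.-1.
  have := max_card (mem (x :: p')); rewrite (card_uniqP hu) /=.
  case: #|T| => //.
exact: (subsetP (ball_mono x hs) _ (path_ball hp')).
Qed.

Lemma has_ball x y : has (fun k => y \in ball e k x) (iota 0 #|T|).
Proof.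
apply/hasP; exists #|T|.-1; last exact: ball_reach.
have : 0 < #|T| by apply/card_gt0P; exists x.
rewrite mem_iota; lia.
Qed.

Lemma gdist_lt x y : gdist e x y < #|T|.
Proof. by have := has_ball x y; rewrite has_find size_iota. Qed.

Lemma gdist_ball x y : y \in ball e (gdist e x y) x.
Proof.
have := nth_find 0 (has_ball x y).
by rewrite nth_iota ?size_iota ?gdist_lt.
Qed.

Lemma gdist_min x y k : y \in ball e k x -> gdist e x y <= k.
Proof.
move=> hk; rewrite leqNgt; apply/negP => hlt.
have hkn : k < #|T| by have := gdist_lt x y; lia.
have := before_find 0 hlt; rewrite nth_iota // add0n hk //.
Qed.

Lemma gdist0 x y : gdist e x y = 0 -> y = x.
Proof. by move=> h; have := gdist_ball x y; rewrite h /= inE => /eqP. Qed.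

Variable r : T.
Definition h x := gdist e r x.

Lemma parent_ex x : 0 < h x -> exists z, e z x && (h z == (h x).-1).
Proof.
rewrite /h; move: (gdist_ball r x) (gdist_min (x:=r) (y:=x)).
case: (gdist e r x) => // k /= /setUP [hb | hx] hmin _.
  by have := hmin k hb; rewrite ltnn.
move: hx; rewrite inE => /existsP [z /andP [zb ez]].
exists z; rewrite ez /=.
have hz := gdist_min zb.
have : k <= gdist e r z.
  have zb' := gdist_ball r z.
  have : x \in ball e (gdist e r z).+1 r.
    by rewrite /=; apply/setUP; right; rewrite inE; apply/existsP; exists z; rewrite zb' ez.
  move/hmin; by rewrite ltnS.
move=> h2; apply/eqP; lia.
Qed.

Definition par x := odflt x [pick z | e z x && (h z == (h x).-1)].

Lemma par_h x : h (par x) = (h x).-1.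
Proof.
rewrite /par; case: pickP => [z /andP [_ /eqP] // | hn] /=.
case: (posnP (h x)) => [-> // | hp].
have [z hz] := parent_ex hp; by rewrite hn in hz.
Qed.

Lemma par_e x : 0 < h x -> e (par x) x.
Proof.
move=> hp; rewrite /par; case: pickP => [z /andP [] // | hn] /=.
have [z hz] := parent_ex hp; by rewrite hn in hz.
Qed.

Definition anc x i := iter (h x - i) par x.

Lemma h_iter x m : h (iter m par x) = h x - m.
Proof. elim: m => [|m IH]; first by rewrite subn0. by rewrite iterS par_h IH subnS. Qed.

Lemma h_anc x i : i <= h x -> h (anc x i) = i.
Proof. by move=> hi; rewrite /anc h_iter subKn. Qed.

Lemma anc_self x : anc x (h x) = x.
Proof. by rewrite /anc subnn. Qed.

Lemma anc_anc x k i : i <= k -> k <= h x -> anc (anc x k) i = anc x i.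
Proof.
move=> hik hk; rewrite {1}/anc h_anc // /anc -iterD; have -> : k - i + (h x - k) = h x - i by lia. by [].
Qed.

Lemma par_anc x k : 0 < k -> k <= h x -> par (anc x k) = anc x k.-1.
Proof. move=> hk hkx; rewrite /anc -iterS; have -> : h x - k.-1 = (h x - k).+1 by lia. by []. Qed.

Lemma par_eq_anc x : 0 < h x -> par x = anc x (h x).-1.
Proof. move=> hp; rewrite -par_anc // anc_self //. Qed.

Lemma h0 x : h x = 0 -> x = r.
Proof. exact: gdist0. Qed.

Lemma h_le_diam x : h x <= diam e.
Proof.
rewrite /diam /h.
have H1 := leq_bigmax (F := fun z => gdist e r z) x.
have H2 := leq_bigmax (F := fun y => \max_(z : T) gdist e y z) r.
exact: leq_trans H1 H2.
Qed.

Hypothesis esym : symmetric e.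

Definition cA y := [set x | (h y <= h x) && (anc x (h y) == y)].
Definition cB i j b := [set x | (h x < i) || (odd (enum_rank (anc x i) %/ 2 ^ j) == b)].
Definition cQ i := [set x | h x <= i].
Definition Sys (D L : nat) : {set {set T}} :=
  [set cA y | y : T] :|:
  [set cB (nat_of_ord p.1.1) (nat_of_ord p.1.2) p.2 | p : 'I_D.+1 * 'I_L * bool] :|:
  [set cQ (nat_of_ord i) | i : 'I_D.+1].

Variables (D L : nat).
Hypothesis hD : forall x, h x <= D.
Hypothesis hL : #|T| < 2 ^ L.

Lemma Sys_route u w : u != w ->
  exists v, e u v /\ cdist (Sys D L) v w < cdist (Sys D L) u w.
Proof.
move=> nuw.
case: (boolP ((h u <= h w) && (anc w (h u) == u))) => [/andP [hle /eqP hanc] | hnot].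
- have hlt : h u < h w.
    rewrite ltn_neqAle hle andbT; apply/negP => /eqP E.
    by move: nuw; rewrite -hanc E anc_self eqxx.
  set v := anc w (h u).+1.
  have hv : h v = (h u).+1 by rewrite /v h_anc.
  have hpv : par v = u by rewrite /v par_anc.
  exists v; split.
    by have := par_e (x := v); rewrite hv hpv => /(_ isT).
  apply: cdist_lt.
    move=> C; rewrite !inE => /orP [/orP [/imsetP [y _ ->] | /imsetP [[[i j] b] _ ->]] | /imsetP [i _ ->]]; rewrite !inE /=.
    + move=> /andP [hyu /eqP ay] /andP [hyw /eqP ayw].
      rewrite hv (leq_trans hyu (leqnSn _)) /= /v anc_anc //; last by rewrite (leq_trans hyu).
      exact/eqP.
    + move=> _ /orP [hwi | hb]; apply/orP.
        by left; rewrite hv; apply: leq_trans hwi.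
      case: (ltnP (h v) i) => hvi; [by left | right].
      rewrite /v anc_anc //; last by rewrite -hv.
    + move=> _ hwi; rewrite hv; exact: leq_trans hlt hwi.
  exists (cA v); split.
  + by rewrite !inE; apply/orP; left; apply/orP; left; apply/imsetP; exists v.
  + by rewrite inE leqnn anc_self eqxx.
  + by rewrite inE hv hlt /= /v.
  + by rewrite inE hv ltnn.
- have hup : 0 < h u.
    rewrite lt0n; apply/negP => /eqP h0u.
    move: hnot; rewrite h0u leq0n /= (h0 h0u).
    by rewrite (h0 (h_anc (leq0n (h w)))) eqxx.
  set v := par u.
  have hv : h v = (h u).-1 by rewrite /v par_h.
  exists v; split; first by rewrite esym; exact: par_e.
  apply: cdist_lt.
    move=> C; rewrite !inE => /orP [/orP [/imsetP [y _ ->] | /imsetP [[[i j] b] _ ->]] | /imsetP [i _ ->]]; rewrite !inE /=.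
    + move=> /andP [hyu /eqP ayu] /andP [hyw /eqP ayw].
      have hyl : h y < h u.
        rewrite ltn_neqAle hyu andbT; apply/eqP => E.
        move: ayu; rewrite E anc_self => E2.
        have H : anc w (h u) == u by rewrite -E ayw E2.
        by move: hnot; rewrite H -E hyw.
      have hy2 : h y <= (h u).-1 by lia.
      rewrite hv hy2 /= /v par_eq_anc // anc_anc //; last by lia.
      by rewrite ayu.
    + move=> /orP [hui | hb] _; apply/orP.
        by left; rewrite hv; lia.
      case: (ltnP (h v) i) => hvi; [by left | right].
      rewrite /v par_eq_anc // anc_anc //; last by lia.
      by rewrite -hv.
    + move=> hui _; rewrite hv; lia.
  case: (ltnP (h w) (h u)) => hwu.
    have hi : (h u).-1 < D.+1 by have := hD u; lia.
    exists (cQ (h u).-1); split.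
    + by rewrite !inE; apply/orP; right; apply/imsetP; exists (Ordinal hi).
    + by rewrite inE hv.
    + by rewrite inE; lia.
    + by rewrite inE -ltnNge; lia.
  have hne : anc w (h u) != u by move: hnot; rewrite hwu.
  have hne' : nat_of_ord (enum_rank (anc w (h u))) != nat_of_ord (enum_rank u).
    apply: contra hne => /eqP E; apply/eqP; apply: enum_rank_inj; exact: val_inj.
  have ha : nat_of_ord (enum_rank (anc w (h u))) < 2 ^ L.
    exact: leq_trans (ltn_ord _) (ltnW hL).
  have hb : nat_of_ord (enum_rank u) < 2 ^ L.
    exact: leq_trans (ltn_ord _) (ltnW hL).
  have [j [hj hd]] := bits_differ _ _ _ ha hb hne'.
  have hi : h u < D.+1 by rewrite ltnS.
  exists (cB (h u) j (odd (enum_rank (anc w (h u)) %/ 2 ^ j))); split.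
  + rewrite !inE; apply/orP; left; apply/orP; right; apply/imsetP.
    by exists (Ordinal hi, Ordinal hj, odd (enum_rank (anc w (h u)) %/ 2 ^ j)).
  + by rewrite inE hv; apply/orP; left; lia.
  + by rewrite inE eqxx orbT.
  + by rewrite inE ltnn anc_self /= eq_sym.
Qed.

Lemma cardsU_le (A B : {set {set T}}) : #|A :|: B| <= #|A| + #|B|.
Proof. by rewrite cardsU leq_subr. Qed.

Lemma Sys_memdim : memdim (Sys D L) <= D.+1 + D.+1 * L * 2 + D.+1.
Proof.
apply/bigmax_leqP => u _.
pose X := [set anc u (nat_of_ord i) | i : 'I_(h u).+1].
have sub : Defs.cat (Sys D L) u \subset
   [set cA y | y in X] :|:
   [set cB (nat_of_ord p.1.1) (nat_of_ord p.1.2) p.2 | p : 'I_D.+1 * 'I_L * bool] :|: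
   [set cQ (nat_of_ord i) | i : 'I_D.+1].
  apply/subsetP => C; rewrite inE => /andP [].
  rewrite !inE => /orP [/orP [/imsetP [y _ E] | H] | H] uC; last by rewrite H orbT.
    apply/orP; left; apply/orP; left; apply/imsetP; exists y => //.
    move: uC; rewrite E inE => /andP [hy /eqP ay].
    apply/imsetP; exists (Ordinal (hy : h y < (h u).+1)) => //.
  by rewrite H orbT.
apply: (leq_trans (subset_leq_card sub)).
apply: (leq_trans (cardsU_le _ _)).
have h1 : #|[set cA y | y in X]| <= D.+1.
  apply: (leq_trans (leq_imset_card _ _)).
  apply: (leq_trans (leq_imset_card _ _)).
  by rewrite card_ord ltnS.
have h2 : #|[set cB (nat_of_ord p.1.1) (nat_of_ord p.1.2) p.2 | p : 'I_D.+1 * 'I_L * bool]| <= D.+1 * L * 2.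
  apply: (leq_trans (leq_imset_card _ _)).
  by rewrite !card_prod !card_ord card_bool.
have h3 : #|[set cQ (nat_of_ord i) | i : 'I_D.+1]| <= D.+1.
  apply: (leq_trans (leq_imset_card _ _)).
  by rewrite card_ord.
have := cardsU_le [set cA y | y in X] [set cB (nat_of_ord p.1.1) (nat_of_ord p.1.2) p.2 | p : 'I_D.+1 * 'I_L * bool].
move=> H; apply: leq_add h3; exact: leq_trans H (leq_add h1 h2).
Qed.

End Graph.
Unset Implicit Arguments.

Theorem theorem1 :
  exists C : nat, forall (T : finType) (e : rel T), is_tree e ->
    exists S : {set {set T}}, routing_correct e S /\
      memdim S <= C * (diam e + trunc_log 2 #|T|) ^ 2.
Proof.
exists 12 => T e [[esym irr] [conn _]].
case: (leqP #|T| 1) => hn.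
  exists set0; split.
    move=> u w nuw; exfalso.
    have : 1 < #|T| by apply/card_gt1P; exists u, w.
    lia.
  apply: leq_trans (leq0n _); rewrite leqn0; apply/eqP.
  apply/eqP; rewrite eqn_leq leq0n andbT.
  apply/bigmax_leqP => u _; rewrite leqn0 cards_eq0; apply/eqP/setP => C.
  by rewrite !inE.
have [r _] : exists r : T, r \in T by apply/card_gt0P; apply: ltnW.
set t := trunc_log 2 #|T|.
have hL : #|T| < 2 ^ t.+1 by exact: trunc_log_ltn.
have ht : 0 < t.
  rewrite lt0n; apply/negP => /eqP H; move: hL; rewrite H; lia.
have hD1 : 0 < diam e.
  have [x [y [_ _ nxy]]] : exists x y : T, [/\ x \in T, y \in T & x != y] by apply/card_gt1P.
  have [z nz] : exists z, z != r.
    case: (eqVneq x r) => [E | ]; last by exists x.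
    by exists y; rewrite -E eq_sym.
  apply: leq_trans (h_le_diam e r z); rewrite lt0n; apply/negP => /eqP H.
  by move: nz; rewrite (h0 conn H) eqxx.
exists (Sys e r (diam e) t.+1); split.
  move=> u w nuw; apply: (Sys_route conn esym (h_le_diam e r) hL nuw).
apply: leq_trans (Sys_memdim t.+1 (h_le_diam e r)) _.
set D := diam e in hD1 *.
nia.
Qed.
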